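(* Let $(m_n)$ be a sequence of positive integers and let $V_n$ and $U_n$ be linear subspaces of $GF(2)^{m_n}$ with $U_n\subseteq V_n$ for every $n$. If the sequence $(U_n)$ has a uniform weight spectrum, then the sequence $(V_n)$ has a uniform weight spectrum.
   Context: The weight ${\rm wt}(x)$ of $x\in GF(2)^m$ is the number of nonzero coordinates; for $W\subseteq GF(2)^m$, $\mathcal{A}_i(W)=\{x\in W:{\rm wt}(x)=i\}$. For a linear subspace $V\subseteq GF(2)^m$ let $\alpha(V)=\max_{i,\,x}\frac{|\mathcal{A}_i(V+x)|}{|V|}$, the maximum over all $i\in\{0,\dots,m\}$ and $x\in GF(2)^m$. A sequence of subspaces $V_n\subseteq GF(2)^{m_n}$ has a uniform weight spectrum if $\alpha(V_n)\to 0$ as $n\to\infty$. *)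

(* Defs.v *)
From HB Require Import structures.
From mathcomp Require Import all_boot all_order all_algebra.
Set Implicit Arguments. Unset Strict Implicit. Unset Printing Implicit Defensive.
Import Order.TTheory GRing.Theory Num.Theory.

Notation F2vec m := 'rV['F_2]_m.

Definition wt (m : nat) (x : F2vec m) : nat := #|[set j : 'I_m | x ord0 j != 0%R]|.

Definition Acoset (m : nat) (V : {vspace F2vec m}) (x : F2vec m) (i : nat)
  : {set F2vec m} := [set y : F2vec m | ((y - x)%R \in V) && (wt y == i)].

Definition card_vs (m : nat) (V : {vspace F2vec m}) : nat :=
  #|[set y : F2vec m | y \in V]|.

Definition alpha (m : nat) (V : {vspace F2vec m}) : rat :=
  ((\max_(i < m.+1) \max_(x : F2vec m) #|Acoset V x i|)%N%:R
   / (card_vs V)%:R)%R.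

Definition uniform_weight_spectrum (ms : nat -> nat)
  (V : forall n, {vspace F2vec (ms n)}) : Prop :=
  forall eps : rat, (0 < eps)%R ->
    exists N : nat, forall n : nat, (N <= n)%N -> (alpha (V n) < eps)%R.

(* Main.v *)
Require Import Defs.
From HB Require Import structures.
From mathcomp Require Import all_boot all_order all_algebra.
Import Order.TTheory GRing.Theory Num.Theory.
Set Implicit Arguments. Unset Strict Implicit.
Section Key.
Variables (m : nat) (U V : {vspace F2vec m}).
Hypothesis hUV : (U <= V)%VS.

Lemma inner_card (y x : F2vec m) : (y - x)%R \in V ->
  \sum_(z in [set z : F2vec m | z \in V]) (if (y - x - z)%R \in U then 1 else 0)
  = card_vs U.
Proof.
move=> yV.
rewrite -big_mkcondr sum1dep_card /card_vs.
pose f := fun u : F2vec m => (y - x - u)%R.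
have finj : injective f by move=> a b /= /addrI /oppr_inj.
rewrite -(card_imset [set u : F2vec m | u \in U] finj); apply: eq_card => z.
rewrite !inE; apply/idP/idP.
- case/andP=> _ hz; apply/imsetP; exists (y - x - z)%R; first by rewrite inE.
  by rewrite /f opprB addrC subrK.
- case/imsetP=> u; rewrite inE => hu ->; rewrite /f opprB addrCA subrr addr0 hu andbT.
  by rewrite rpredB // (subvP hUV).
Qed.

Lemma key (x : F2vec m) (i : nat) :
  #|Acoset V x i| * card_vs U <=
  \sum_(z in [set z : F2vec m | z \in V]) #|Acoset U (x + z)%R i|.
Proof.
rewrite -sum_nat_const.
rewrite (eq_bigr (fun y => \sum_(z in [set z : F2vec m | z \in V])
   (if (y - x - z)%R \in U then 1 else 0))); last first.
  by move=> y; rewrite inE => /andP[yV _]; rewrite inner_card.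
rewrite exchange_big /=; apply: leq_sum => z _.
rewrite -big_mkcondr sum1dep_card; apply: subset_leq_card.
apply/subsetP => y; rewrite !inE => /andP[/andP[_ ->] h] /=; rewrite andbT.
by rewrite opprD addrA.
Qed.

End Key.

Lemma card_vs_gt0 m (U : {vspace F2vec m}) : (0 < card_vs U)%N.
Proof. by apply/card_gt0P; exists 0%R; rewrite inE mem0v. Qed.

Lemma alpha_le m (U V : {vspace F2vec m}) : (U <= V)%VS -> (alpha V <= alpha U)%R.
Proof.
move=> hUV; rewrite /alpha.
set MV := (\max_(i < m.+1) _)%N.
set MU := (\max_(i < m.+1) _)%N.
have hV := card_vs_gt0 V; have hU := card_vs_gt0 U.
have key2 : (MV * card_vs U <= MU * card_vs V)%N.
  rewrite /MV; have [|i0 ->] := @bigop.eq_bigmax _ (fun i : 'I_m.+1 => \max_(x : F2vec m) #|Acoset V x i|); first by rewrite card_ord.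
  have [|x0 ->] := @bigop.eq_bigmax _ (fun x : F2vec m => #|Acoset V x i0|).
    by apply/card_gt0P; exists 0%R.
  apply: leq_trans (key hUV x0 i0) _.
  rewrite mulnC /card_vs -sum_nat_const; apply: leq_sum => z _.
  rewrite /MU; have h1 := @bigop.leq_bigmax _ (fun i : 'I_m.+1 => \max_(x : F2vec m) #|Acoset U x i|) i0.
  have h2 := @bigop.leq_bigmax _ (fun x : F2vec m => #|Acoset U x i0|) (x0 + z)%R.
  exact: leq_trans h2 h1.
rewrite ler_pdivrMr ?ltr0n // mulrAC ler_pdivlMr ?ltr0n //.
by rewrite -!natrM ler_nat.
Qed.

Theorem proposition2 (ms : nat -> nat) (hpos : forall n, (0 < ms n)%N)
  (V U : forall n, {vspace F2vec (ms n)})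
  (hUV : forall n, (U n <= V n)%VS)
  (hU : uniform_weight_spectrum U) :
  uniform_weight_spectrum V.
Proof.
move=> eps heps; have [N hN] := hU eps heps; exists N => n hn.
exact: le_lt_trans (alpha_le (hUV n)) (hN n hn).
Qed.
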